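(* Let $Q:(-\infty,-1)\to(-\infty,0)$ be the inverse of the strictly increasing function $G\mapsto G-e^G$ on $(-\infty,0)$, and define $R:\mathbb{R}\to\mathbb{R}$ by $R(V)=-2(1-e^{Q(V)})^2$ for $V<-1$ and $R(V)=4(V+1)$ for $V\ge -1$. Then, up to translations $s\mapsto s+s_0$, the two-point boundary value problem $$V''-3V'=R(V),\ s\in(-\infty,\infty),\qquad V(-\infty)=-1,\quad V(\infty)=-\infty$$ has a unique solution; that is, if $V_1,V_2$ are two solutions, there exists $s_0\in\mathbb{R}$ with $V_1(s)=V_2(s+s_0)$ for all $s$.
   Context: Here prime denotes $d/ds$, and $V(-\infty)$, $V(\infty)$ denote the limits as $s\to-\infty$, $s\to\infty$. *)

(* Defs.v *)
From Stdlib Require Import Reals Lra ClassicalEpsilon.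
From Coquelicot Require Import Coquelicot.
Open Scope R_scope.

(* Q : (-oo,-1) -> (-oo,0), inverse of G |-> G - exp G on (-oo,0).
   For V < -1 there is a unique such G; outside (-oo,-1) the value is
   irrelevant (Q is only used for V < -1). *)
Definition Q (V : R) : R :=
  epsilon (inhabits 0) (fun G => G < 0 /\ G - exp G = V).

(* The right-hand side R(V) of the paper (named Rfun to avoid clashing with the type R). *)
Definition Rfun (V : R) : R :=
  if Rlt_dec V (-1) then -2 * (1 - exp (Q V)) ^ 2 else 4 * (V + 1).

Definition is_bvp_solution (V : R -> R) : Prop :=
  (forall s, ex_derive V s /\ ex_derive (Derive V) s /\
     Derive_n V 2 s - 3 * Derive V s = Rfun (V s)) /\
  is_lim V m_infty (-1) /\
  is_lim V p_infty m_infty.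

(* Main.v *)
Require Import Defs.
From Stdlib Require Import Reals Lra Lia ClassicalEpsilon Ranalysis5.
From Coquelicot Require Import Coquelicot.
Open Scope R_scope.

Lemma cont_of_der (f : R -> R) x l : is_derive f x l -> continuity_pt f x.
Proof.
  intro H. apply continuity_pt_filterlim. apply (@ex_derive_continuous R_AbsRing R_NormedModule). exists l; exact H.
Qed.

Lemma der_plus (f g : R -> R) x a b : is_derive f x a -> is_derive g x b ->
  is_derive (fun t => f t + g t) x (a + b).
Proof. intros H1 H2. exact (is_derive_plus f g x a b H1 H2). Qed.
Lemma der_minus (f g : R -> R) x a b : is_derive f x a -> is_derive g x b ->
  is_derive (fun t => f t - g t) x (a - b).
Proof. intros H1 H2. exact (is_derive_minus f g x a b H1 H2). Qed.
Lemma der_mult (f g : R -> R) x a b : is_derive f x a -> is_derive g x b ->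
  is_derive (fun t => f t * g t) x (a * g x + f x * b).
Proof. intros H1 H2. exact (is_derive_mult f g x a b H1 H2 Rmult_comm). Qed.
Lemma der_comp (f g : R -> R) x a b : is_derive f (g x) a -> is_derive g x b ->
  is_derive (fun t => f (g t)) x (b * a).
Proof. intros H1 H2. exact (is_derive_comp f g x a b H1 H2). Qed.
Lemma der_ext (f g : R -> R) x a b : (forall t, f t = g t) -> a = b -> is_derive f x a -> is_derive g x b.
Proof. intros H e H1. subst. apply (is_derive_ext f g); auto. Qed.

Lemma mono_le (f df : R -> R) a b : a <= b ->
  (forall x, a <= x <= b -> is_derive f x (df x)) ->
  (forall x, a <= x <= b -> 0 <= df x) -> f a <= f b.
Proof.
  intros Hab Hd Hp.
  destruct (MVT_gen f a b df) as [c [Hc Heq]].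
  - intros x Hx. apply Hd. rewrite Rmin_left, Rmax_right in Hx; lra.
  - intros x Hx. apply (cont_of_der f x (df x)). apply Hd.
    rewrite Rmin_left, Rmax_right in Hx; lra.
  - rewrite Rmin_left, Rmax_right in Hc; try lra.
    assert (0 <= df c) by (apply Hp; lra). nra.
Qed.

Lemma mono_lt (f df : R -> R) a b : a < b ->
  (forall x, a <= x <= b -> is_derive f x (df x)) ->
  (forall x, a <= x <= b -> 0 < df x) -> f a < f b.
Proof.
  intros Hab Hd Hp.
  destruct (MVT_gen f a b df) as [c [Hc Heq]].
  - intros x Hx. apply Hd. rewrite Rmin_left, Rmax_right in Hx; lra.
  - intros x Hx. apply (cont_of_der f x (df x)). apply Hd.
    rewrite Rmin_left, Rmax_right in Hx; lra.
  - rewrite Rmin_left, Rmax_right in Hc; try lra.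
    assert (0 < df c) by (apply Hp; lra). nra.
Qed.

Lemma comp_bound (f df g dg : R -> R) a b : a <= b ->
  (forall x, a <= x <= b -> is_derive f x (df x)) ->
  (forall x, a <= x <= b -> is_derive g x (dg x)) ->
  (forall x, a <= x <= b -> Rabs (df x) <= dg x) ->
  Rabs (f b - f a) <= g b - g a.
Proof.
  intros Hab Hf Hg Hb.
  assert (H1 : g a - f a <= g b - f b).
  { apply (mono_le (fun x => g x - f x) (fun x => dg x - df x)); auto.
    - intros x Hx. apply der_minus; auto.
    - intros x Hx. specialize (Hb x Hx). apply Rabs_le_between in Hb. lra. }
  assert (H2 : g a + f a <= g b + f b).
  { apply (mono_le (fun x => g x + f x) (fun x => dg x + df x)); auto.
    - intros x Hx. apply der_plus; auto.
    - intros x Hx. specialize (Hb x Hx). apply Rabs_le_between in Hb. lra. }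
  apply Rabs_le_between. lra.
Qed.

Lemma exp_diff_le a b : a <= b -> exp b - exp a <= exp b * (b - a).
Proof.
  intro H.
  destruct (MVT_gen exp a b exp) as [c [Hc Heq]].
  - intros; apply is_derive_exp.
  - intros; apply (cont_of_der exp x (exp x)), is_derive_exp.
  - rewrite Rmin_left, Rmax_right in Hc; try lra.
    rewrite Heq. apply Rmult_le_compat_r; [lra|].
    destruct (Req_dec c b); [subst; lra|]. left; apply exp_increasing; lra.
Qed.

Lemma exp_ge_1 x : 1 + x <= exp x.
Proof.
  destruct (Rlt_or_le 0 x). { left; apply exp_ineq1; lra. }
  assert (H1 : (fun t => 1 + t - exp t) x <= (fun t => 1 + t - exp t) 0).
  { apply (mono_le (fun t => 1 + t - exp t) (fun t => 1 - exp t) x 0); auto.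
    - intros t _. auto_derive; auto; ring.
    - intros t Ht. destruct (Req_dec t 0). subst; rewrite exp_0; lra.
      assert (exp t < exp 0) by (apply exp_increasing; lra). rewrite exp_0 in H1. lra. }
  simpl in H1. rewrite exp_0 in H1. lra.
Qed.

Lemma Q_spec V : V < -1 -> Q V < 0 /\ Q V - exp (Q V) = V.
Proof.
  intro HV. unfold Q. apply epsilon_spec.
  destruct (IVT_gen (fun G => G - exp G) V 0 V) as [x [Hx Hfx]].
  - intro x. apply (cont_of_der _ x (1 - exp x)). auto_derive; auto; ring.
  - rewrite exp_0. assert (0 < exp V) by apply exp_pos.
    rewrite Rmin_left, Rmax_right; lra.
  - rewrite Rmin_left, Rmax_right in Hx; try lra. exists x. split; auto.
    destruct (Req_dec x 0); [rewrite H in Hfx; rewrite exp_0 in Hfx; lra| lra].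
Qed.

Lemma Q_lip V1 V2 : V1 < -1 -> V2 < -1 -> Q V1 <= Q V2 ->
  (1 - exp (Q V2)) * (Q V2 - Q V1) <= V2 - V1.
Proof.
  intros H1 H2 Hle. destruct (Q_spec V1 H1) as [a1 b1]. destruct (Q_spec V2 H2) as [a2 b2].
  pose proof (exp_diff_le _ _ Hle). nra.
Qed.

Lemma Q_mono V1 V2 : V1 < -1 -> V2 < -1 -> V1 <= V2 -> Q V1 <= Q V2.
Proof.
  intros H1 H2 H. destruct (Rle_or_lt (Q V1) (Q V2)) as [h|h]; auto.
  pose proof (Q_lip V2 V1 H2 H1 (Rlt_le _ _ h)).
  destruct (Q_spec V1 H1) as [a1 b1].
  assert (exp (Q V1) < 1) by (rewrite <- exp_0; apply exp_increasing; lra).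
  assert (0 < (1 - exp (Q V1)) * (Q V1 - Q V2)) by (apply Rmult_lt_0_compat; lra). lra.
Qed.

Lemma Q_cont V0 : V0 < -1 -> continuity_pt Q V0.
Proof.
  intro H0. set (Vs := (V0 - 1)/2).
  assert (Hs : V0 < Vs < -1) by (unfold Vs; lra).
  destruct (Q_spec Vs ltac:(lra)) as [Has Hbs].
  set (c := 1 - exp (Q Vs)).
  assert (Hc : 0 < c) by (unfold c; assert (exp (Q Vs) < 1) by (rewrite <- exp_0; apply exp_increasing; lra); lra).
  intros eps Heps. exists (Rmin (eps * c) (Vs - V0)). split.
  { apply Rmin_pos; [nra|lra]. }
  intros V [_ HV]. simpl in *. unfold Rdist in *.
  assert (Hd1 : Rabs (V - V0) < eps * c) by (eapply Rlt_le_trans; [exact HV| apply Rmin_l]).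
  assert (Hd2 : Rabs (V - V0) < Vs - V0) by (eapply Rlt_le_trans; [exact HV| apply Rmin_r]).
  apply Rabs_def2 in Hd2. assert (HV1 : V < Vs) by lra.
  assert (HQ : forall W, W <= Vs -> exp (Q W) <= exp (Q Vs)).
  { intros W HW. destruct (Req_dec (Q W) (Q Vs)) as [e|e]. rewrite e; lra.
    left; apply exp_increasing. pose proof (Q_mono W Vs ltac:(lra) ltac:(lra) HW). lra. }
  destruct (Rle_or_lt (Q V) (Q V0)) as [h|h].
  - pose proof (Q_lip V V0 ltac:(lra) H0 h). pose proof (HQ V0 ltac:(lra)).
    assert (c * (Q V0 - Q V) <= V0 - V) by (unfold c; nra).
    apply Rabs_def2 in Hd1. rewrite Rabs_left1; [|lra].
    apply (Rmult_lt_reg_l c); [lra|]. nra.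
  - pose proof (Q_lip V0 V H0 ltac:(lra) (Rlt_le _ _ h)). pose proof (HQ V ltac:(lra)).
    assert (c * (Q V - Q V0) <= V - V0) by (unfold c; nra).
    apply Rabs_def2 in Hd1. rewrite Rabs_right; [|lra].
    apply (Rmult_lt_reg_l c); [lra|]. nra.
Qed.

Lemma B1 y : 0 <= y -> 2 * (1 - exp (- y))^2 <= 4 * (exp (-y) - 1 + y).
Proof.
  intro Hy.
  pose proof (mono_le (fun t => 4 * (exp (-t) - 1 + t) - 2 * (1 - exp (- t))^2)
       (fun t => 4 * (1 - exp (-t))^2) 0 y Hy) as H.
  simpl in H. rewrite Ropp_0, exp_0 in H.
  enough (4 * (1 - 1 + 0) - 2 * (1 - 1) ^ 2 <= 4 * (exp (- y) - 1 + y) - 2 * (1 - exp (- y)) ^ 2) by lra.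
  apply H.
  - intros t _. auto_derive; auto. field.
  - intros t _. apply Rmult_le_pos; [lra| apply pow2_ge_0].
Qed.

Lemma B2 y : 0 <= y -> 4 * (exp (-y) - 1 + y) - 2 * (1 - exp (- y))^2 <= 4/3 * y^3.
Proof.
  intro Hy.
  pose proof (mono_le (fun t => 4/3 * t^3 - (4 * (exp (-t) - 1 + t) - 2 * (1 - exp (- t))^2))
     (fun t => 4 * t^2 - 4 * (1 - exp (-t))^2) 0 y Hy) as H.
  simpl in H. rewrite Ropp_0, exp_0 in H.
  enough (4 / 3 * (0 * (0 * (0 * 1))) - (4 * (1 - 1 + 0) - 2 * ((1 - 1) * ((1 - 1) * 1))) <=
    4 / 3 * (y * (y * (y * 1))) - (4 * (exp (- y) - 1 + y) - 2 * ((1 - exp (- y)) * ((1 - exp (- y)) * 1)))) by lra.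
  apply H.
  - intros t _. auto_derive; auto. field.
  - intros t Ht. pose proof (exp_ge_1 (-t)).
    assert (exp (-t) <= 1) by (rewrite <- exp_0; destruct (Req_dec t 0);
        [subst; rewrite Ropp_0; lra| left; apply exp_increasing; lra]).
    nra.
Qed.

Lemma B3a y : 0 <= y -> 1 - y + y^2/2 - y^3/6 <= exp (-y).
Proof.
  intro Hy.
  assert (H2 : forall t, 0 <= t -> exp (-t) <= 1 - t + t^2/2).
  { intros t Ht.
    pose proof (mono_le (fun s => (1 - s + s^2/2) - exp (-s)) (fun s => exp (-s) - 1 + s) 0 t Ht) as H.
    simpl in H. rewrite Ropp_0, exp_0 in H.
    enough (1 - 0 + 0 * (0 * 1) / 2 - 1 <= 1 - t + t * (t * 1) / 2 - exp (- t)) by lra.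
    apply H.
    - intros s _. auto_derive; auto. field.
    - intros s _. pose proof (exp_ge_1 (-s)). lra. }
  pose proof (mono_le (fun s => exp (-s) - (1 - s + s^2/2 - s^3/6)) (fun s => - exp (-s) + 1 - s + s^2/2) 0 y Hy) as H.
  simpl in H. rewrite Ropp_0, exp_0 in H.
  enough (1 - (1 - 0 + 0 * (0 * 1) / 2 - 0 * (0 * (0 * 1)) / 6) <=
     exp (- y) - (1 - y + y * (y * 1) / 2 - y * (y * (y * 1)) / 6)) by lra.
  apply H.
  - intros s _. auto_derive; auto. field.
  - intros s Hs. pose proof (H2 s ltac:(lra)). lra.
Qed.

Lemma exp_m1_gt : 1/3 <= exp (-1).
Proof.
  pose proof exp_le_3. assert (exp 1 * exp (-1) = 1) by (rewrite <- exp_plus; replace (1 + -1) with 0 by ring; apply exp_0).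
  pose proof (exp_pos 1). pose proof (exp_pos (-1)).
  nra.
Qed.

Lemma B4 y : 1 <= y -> exp (-1) <= exp (-y) - 1 + y.
Proof.
  intro Hy.
  pose proof (mono_le (fun s => exp (-s) - 1 + s) (fun s => 1 - exp (-s)) 1 y Hy) as H.
  simpl in H.
  enough (exp (- 1) - 1 + 1 <= exp (- y) - 1 + y) by lra.
  apply H.
  - intros s _. auto_derive; auto. field.
  - intros s Hs. assert (exp (-s) <= 1) by (rewrite <- exp_0; left; apply exp_increasing; lra). lra.
Qed.

Definition yof (u : R) : R := - Q (-1 - u).
Definition rr (u : R) : R := 2 * (1 - exp (Q (-1 - u)))^2.
Definition mm (u : R) : R := if Rle_dec u 0 then 4 else rr u / u.

Lemma y_spec u : 0 < u -> 0 < yof u /\ exp (- yof u) - 1 + yof u = u.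
Proof.
  intro Hu. destruct (Q_spec (-1 - u) ltac:(lra)) as [h1 h2]. unfold yof.
  rewrite Ropp_involutive. lra.
Qed.

Lemma rr_y u : rr u = 2 * (1 - exp (- yof u))^2.
Proof. unfold rr, yof. rewrite Ropp_involutive. reflexivity. Qed.

Lemma Rfun_neg u : 0 < u -> Rfun (-1 - u) = - rr u.
Proof.
  intro Hu. unfold Rfun. destruct (Rlt_dec (-1-u) (-1)); [unfold rr; ring| lra].
Qed.

Lemma rr_pos u : 0 < u -> 0 < rr u.
Proof.
  intro Hu. rewrite rr_y. destruct (y_spec u Hu) as [h1 h2].
  assert (exp (- yof u) < 1) by (rewrite <- exp_0; apply exp_increasing; lra).
  assert (0 < 1 - exp (- yof u)) by lra. nra.
Qed.

Lemma rr_le u : 0 < u -> rr u <= 4 * u.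
Proof.
  intro Hu. rewrite rr_y. destruct (y_spec u Hu) as [h1 h2].
  pose proof (B1 (yof u) ltac:(lra)). lra.
Qed.

Lemma mm_pos u : 0 < mm u.
Proof.
  unfold mm. destruct (Rle_dec u 0). lra.
  apply Rdiv_lt_0_compat; [apply rr_pos|]; lra.
Qed.

Lemma mm_le u : mm u <= 4.
Proof.
  unfold mm. destruct (Rle_dec u 0). lra.
  pose proof (rr_le u ltac:(lra)). apply Rle_div_l; lra.
Qed.

Lemma mm_near0 u : 0 < u < 1/3 -> exists y, 0 <= y /\ y^2 <= 3 * u /\ 4 - 4 * y <= mm u.
Proof.
  intro Hu. destruct (y_spec u ltac:(lra)) as [h1 h2]. set (y := yof u) in *.
  exists y.
  assert (Hy1 : y < 1).
  { destruct (Rlt_or_le y 1); auto. pose proof (B4 y H). pose proof exp_m1_gt. lra. }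
  pose proof (B3a y ltac:(lra)).
  assert (Hu3 : y^2 <= 3 * u) by nra.
  split; [lra|]. split; auto.
  unfold mm. destruct (Rle_dec u 0); [lra|].
  rewrite rr_y. fold y. pose proof (B2 y ltac:(lra)).
  apply Rle_div_r; [lra|]. rewrite h2 in H0.
  assert (y^3 <= 3 * u * y) by nra. nra.
Qed.

Lemma rr_cont u : 0 < u -> continuity_pt rr u.
Proof.
  intro Hu. unfold rr.
  apply (continuity_pt_comp (fun v => Q (-1 - v)) (fun z => 2 * (1 - exp z)^2)).
  - apply (continuity_pt_comp (fun v => -1 - v) Q).
    + apply (cont_of_der _ u (-1)). auto_derive; auto; ring.
    + apply Q_cont. lra.
  - eapply cont_of_der. auto_derive; auto.
Qed.

Lemma mm_cont u : continuity_pt mm u.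
Proof.
  destruct (Rlt_or_le u 0) as [h|h].
  - intros eps Heps. exists (-u). split; [lra|]. intros v [_ Hv]. simpl in *. unfold Rdist in *.
    unfold mm. destruct (Rle_dec v 0); destruct (Rle_dec u 0); try lra.
    + rewrite Rminus_eq_0, Rabs_R0; lra.
    + apply Rabs_def2 in Hv. lra.
  - destruct h as [h|h].
    + assert (H : continuity_pt (fun v => rr v / v) u).
      { apply continuity_pt_div. apply rr_cont; auto. apply continuity_pt_id. lra. }
      intros eps Heps. destruct (H eps Heps) as [d [Hd Hd2]].
      exists (Rmin d u). split. apply Rmin_pos; lra.
      intros v [Hv1 Hv]. simpl in *. unfold Rdist in *.
      assert (Rabs (v - u) < u) by (eapply Rlt_le_trans; [exact Hv| apply Rmin_r]).
      apply Rabs_def2 in H0.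
      unfold mm. destruct (Rle_dec v 0); destruct (Rle_dec u 0); try lra.
      apply Hd2. split; auto. simpl; unfold Rdist. eapply Rlt_le_trans; [exact Hv| apply Rmin_l].
    + subst u. intros eps Heps. exists (Rmin (1/4) (eps^2/48)). split.
      { apply Rmin_pos; [lra| nra]. }
      intros v [_ Hv]. simpl in *. unfold Rdist in *. rewrite Rminus_0_r in Hv.
      assert (Hv1 : Rabs v < 1/4) by (eapply Rlt_le_trans; [exact Hv| apply Rmin_l]).
      assert (Hv2 : Rabs v < eps^2/48) by (eapply Rlt_le_trans; [exact Hv| apply Rmin_r]).
      unfold mm at 2. destruct (Rle_dec 0 0); [|lra].
      destruct (Rle_dec v 0).
      * unfold mm. destruct (Rle_dec v 0); [|lra]. rewrite Rminus_eq_0, Rabs_R0; lra.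
      * apply Rabs_def2 in Hv1. apply Rabs_def2 in Hv2.
        destruct (mm_near0 v ltac:(lra)) as [y [Hy0 [Hy1 Hy2]]].
        pose proof (mm_le v).
        assert (y < eps/4) by nra.
        rewrite Rabs_left1; lra.
Qed.

Lemma cont_intro (f : R -> R) x :
  (forall eps, 0 < eps -> exists d, 0 < d /\ forall y, Rabs (y - x) < d -> Rabs (f y - f x) < eps) ->
  continuity_pt f x.
Proof.
  intros H eps Heps. destruct (H eps Heps) as [d [Hd H']]. exists d. split; auto.
  intros y [_ Hy]. apply H'. exact Hy.
Qed.

Lemma cont_elim (f : R -> R) x : continuity_pt f x ->
  forall eps, 0 < eps -> exists d, 0 < d /\ forall y, Rabs (y - x) < d -> Rabs (f y - f x) < eps.
Proof.
  intros H eps Heps. destruct (H eps Heps) as [d [Hd H']]. exists d. split; auto.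
  intros y Hy. destruct (Req_dec y x). subst; rewrite Rminus_eq_0, Rabs_R0; lra.
  apply H'. split; [split; [exact I| auto]| exact Hy].
Qed.

Lemma cont_ext_loc (f g : R -> R) x d : 0 < d ->
  (forall y, Rabs (y - x) < d -> f y = g y) -> continuity_pt g x -> continuity_pt f x.
Proof.
  intros Hd He Hg. apply cont_intro. intros eps Heps.
  destruct (cont_elim g x Hg eps Heps) as [d' [Hd' H']].
  exists (Rmin d d'). split. apply Rmin_pos; lra.
  intros y Hy. rewrite (He y), (He x). apply H'.
  eapply Rlt_le_trans; [exact Hy| apply Rmin_r].
  rewrite Rminus_eq_0, Rabs_R0; lra.
  eapply Rlt_le_trans; [exact Hy| apply Rmin_l].
Qed.

Lemma cont_to_continuous (f : R -> R) x : continuity_pt f x -> continuous f x.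
Proof. intro H. apply continuity_pt_filterlim. exact H. Qed.

Lemma ex_RInt_cont (f : R -> R) a b : (forall x, continuity_pt f x) -> ex_RInt f a b.
Proof. intro H. apply (@ex_RInt_continuous R_CompleteNormedModule). intros z _. apply cont_to_continuous, H. Qed.

Lemma RInt_bounds (f : R -> R) a b lo hi : a <= b -> ex_RInt f a b ->
  (forall x, a <= x <= b -> lo <= f x <= hi) -> lo * (b - a) <= RInt f a b <= hi * (b - a).
Proof.
  intros Hab Hex Hb. split.
  - replace (lo * (b - a)) with (RInt (fun _ => lo) a b).
    + apply RInt_le; auto. apply ex_RInt_const. intros x Hx; apply Hb; lra.
    + rewrite RInt_const. unfold scal; simpl; unfold mult; simpl. ring.
  - replace (hi * (b - a)) with (RInt (fun _ => hi) a b).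
    + apply RInt_le; auto. apply ex_RInt_const. intros x Hx; apply Hb; lra.
    + rewrite RInt_const. unfold scal; simpl; unfold mult; simpl. ring.
Qed.

Lemma RInt_deriv (f : R -> R) a x : (forall y, continuity_pt f y) ->
  is_derive (fun b => RInt f a b) x (f x).
Proof.
  intro H. apply (is_derive_RInt f (fun b => RInt f a b) a).
  - apply filter_forall. intro b. apply (@RInt_correct R_CompleteNormedModule). apply ex_RInt_cont; auto.
  - apply cont_to_continuous, H.
Qed.

Definition Top (rho : R -> R) (u : R) : R :=
  if Rle_dec u 0 then 3 + 4 / rho 0 else 3 + RInt (fun w => mm w / rho w) 0 u / u.

Definition Good (rho : R -> R) : Prop :=
  (forall u, continuity_pt rho u) /\ (forall u, 3 <= rho u <= 13/3).

Lemma integrand_cont rho : Good rho -> forall w, continuity_pt (fun w => mm w / rho w) w.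
Proof.
  intros [Hc Hb] w. apply continuity_pt_div; auto. apply mm_cont.
  specialize (Hb w). lra.
Qed.

Lemma integrand_bounds rho : Good rho -> forall w, 0 <= mm w / rho w <= 4/3.
Proof.
  intros [Hc Hb] w. specialize (Hb w). pose proof (mm_pos w). pose proof (mm_le w).
  split. apply Rle_div_r; lra. apply Rle_div_l; lra.
Qed.

Lemma Top_bounds rho : Good rho -> forall u, 3 <= Top rho u <= 13/3.
Proof.
  intros HG u. unfold Top. destruct (Rle_dec u 0).
  - destruct HG as [_ Hb]. specialize (Hb 0).
    assert (0 <= 4 / rho 0 <= 4/3). { split. apply Rle_div_r; lra. apply Rle_div_l; lra. } lra.
  - pose proof (RInt_bounds (fun w => mm w / rho w) 0 u 0 (4/3) ltac:(lra)
      (ex_RInt_cont _ _ _ (integrand_cont rho HG))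
      (fun x _ => integrand_bounds rho HG x)) as H.
    assert (0 <= RInt (fun w => mm w / rho w) 0 u / u <= 4/3).
    { split. apply Rle_div_r; lra. apply Rle_div_l; lra. } lra.
Qed.

Lemma Top_cont rho : Good rho -> forall u, continuity_pt (Top rho) u.
Proof.
  intros HG u. destruct (Rlt_or_le u 0) as [h|h].
  - apply (cont_ext_loc _ (fun _ => 3 + 4 / rho 0) u (-u)); [lra| |].
    + intros y Hy. apply Rabs_def2 in Hy. unfold Top. destruct (Rle_dec y 0); [auto|lra].
    + apply continuity_pt_const. intros a b; reflexivity.
  - destruct h as [h|h].
    + apply (cont_ext_loc _ (fun v => 3 + RInt (fun w => mm w / rho w) 0 v / v) u u); [lra| |].
      * intros y Hy. apply Rabs_def2 in Hy. unfold Top. destruct (Rle_dec y 0); [lra|auto].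
      * apply continuity_pt_plus. apply continuity_pt_const. intros a b; reflexivity.
        apply continuity_pt_div; [|apply continuity_pt_id|lra].
        eapply cont_of_der. apply RInt_deriv. apply integrand_cont; auto.
    + subst u. set (g := fun w => mm w / rho w).
      assert (Hg0 : g 0 = 4 / rho 0).
      { unfold g, mm. destruct (Rle_dec 0 0); [auto|lra]. }
      apply cont_intro. intros eps Heps.
      destruct (cont_elim g 0 (integrand_cont rho HG 0) (eps/2) ltac:(lra)) as [d [Hd Hd']].
      exists d. split; auto. intros y Hy.
      unfold Top at 2. destruct (Rle_dec 0 0); [|lra].
      unfold Top. destruct (Rle_dec y 0).
      * rewrite Rminus_eq_0, Rabs_R0; lra.
      * rewrite Rminus_0_r in Hy.
        pose proof (RInt_bounds g 0 y (g 0 - eps/2) (g 0 + eps/2) ltac:(lra)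
          (ex_RInt_cont _ _ _ (integrand_cont rho HG))) as Hb.
        assert (Hb2 : forall x, 0 <= x <= y -> g 0 - eps/2 <= g x <= g 0 + eps/2).
        { intros x Hx. assert (Rabs (x - 0) < d) by (rewrite Rminus_0_r; apply Rabs_def2 in Hy; apply Rabs_def1; lra).
          specialize (Hd' x H). apply Rabs_def2 in Hd'. lra. }
        specialize (Hb Hb2). fold g. rewrite <- Hg0.
        assert (g 0 - eps/2 <= RInt g 0 y / y <= g 0 + eps/2).
        { split. apply Rle_div_r; lra. apply Rle_div_l; lra. }
        apply Rabs_def1; lra.
Qed.

Lemma Top_good rho : Good rho -> Good (Top rho).
Proof. intro HG. split. apply Top_cont; auto. apply Top_bounds; auto. Qed.

Lemma Top_contr rho1 rho2 D : Good rho1 -> Good rho2 ->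
  (forall u, Rabs (rho1 u - rho2 u) <= D) -> forall u, Rabs (Top rho1 u - Top rho2 u) <= 4/9 * D.
Proof.
  intros G1 G2 HD u.
  assert (Key : forall w, Rabs (mm w / rho1 w - mm w / rho2 w) <= 4/9 * D).
  { intro w. destruct G1 as [_ B1]. destruct G2 as [_ B2]. specialize (B1 w). specialize (B2 w).
    specialize (HD w). pose proof (mm_pos w). pose proof (mm_le w).
    replace (mm w / rho1 w - mm w / rho2 w) with (mm w * (rho2 w - rho1 w) / (rho1 w * rho2 w))
      by (field; lra).
    rewrite Rabs_div by nra. rewrite Rabs_mult. rewrite (Rabs_right (mm w)) by lra.
    rewrite (Rabs_right (rho1 w * rho2 w)) by nra.
    apply Rle_div_l; [nra|]. rewrite Rabs_minus_sym.
    assert (0 <= Rabs (rho1 w - rho2 w)) by apply Rabs_pos.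
    assert (mm w * Rabs (rho1 w - rho2 w) <= 4 * D).
    { apply Rle_trans with (4 * Rabs (rho1 w - rho2 w)). apply Rmult_le_compat_r; lra. lra. }
    assert (9 <= rho1 w * rho2 w) by nra. assert (0 <= D) by lra.
    assert (4 * D <= 4/9 * D * (rho1 w * rho2 w)) by nra. lra. }
  unfold Top. destruct (Rle_dec u 0).
  - replace (3 + 4 / rho1 0 - (3 + 4 / rho2 0)) with (mm 0 / rho1 0 - mm 0 / rho2 0).
    apply Key. unfold mm. destruct (Rle_dec 0 0); [ring|lra].
  - set (g1 := fun w => mm w / rho1 w). set (g2 := fun w => mm w / rho2 w).
    replace (3 + RInt g1 0 u / u - (3 + RInt g2 0 u / u)) with (RInt (fun w => g1 w - g2 w) 0 u / u).
    + rewrite Rabs_div by lra. rewrite (Rabs_right u) by lra. apply Rle_div_l; [lra|].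
      pose proof (abs_RInt_le_const (fun w => g1 w - g2 w) 0 u (4/9 * D) ltac:(lra)).
      assert (ex_RInt (fun w => g1 w - g2 w) 0 u).
      { apply ex_RInt_cont. intro y. apply continuity_pt_minus; apply integrand_cont; auto. }
      assert (Rabs (RInt (fun w : R => g1 w - g2 w) 0 u) <= (u - 0) * (4 / 9 * D)).
      { apply H; auto. intros; apply Key. }
      lra.
    + assert (E : RInt (fun w => g1 w - g2 w) 0 u = RInt g1 0 u - RInt g2 0 u).
      { exact (RInt_minus g1 g2 0 u (ex_RInt_cont _ _ _ (integrand_cont _ G1))
           (ex_RInt_cont _ _ _ (integrand_cont _ G2))). }
      rewrite E. field. lra.
Qed.

Definition rho_n (n : nat) : R -> R := Nat.iter n Top (fun _ => 4).

Lemma rho_n_S n : rho_n (S n) = Top (rho_n n).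
Proof. reflexivity. Qed.

Lemma rho_n_good n : Good (rho_n n).
Proof.
  induction n.
  - split. intro u. apply continuity_pt_const. intros a b; reflexivity.
    intro u. simpl. lra.
  - rewrite rho_n_S. apply Top_good; auto.
Qed.

Lemma rho_step n u : Rabs (rho_n (S n) u - rho_n n u) <= 4/3 * (4/9)^n.
Proof.
  revert u. induction n; intro u.
  - destruct (rho_n_good 1) as [_ B1]. destruct (rho_n_good 0) as [_ B0].
    specialize (B1 u). specialize (B0 u). simpl pow. apply Rabs_le_between. lra.
  - rewrite (rho_n_S (S n)), (rho_n_S n).
    eapply Rle_trans. apply (Top_contr _ _ (4/3 * (4/9)^n)).
    + rewrite <- rho_n_S. apply rho_n_good.
    + apply rho_n_good.
    + intro v. rewrite <- rho_n_S. auto.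
    + simpl pow. lra.
Qed.

Lemma rho_tail n k u : Rabs (rho_n (n + k) u - rho_n n u) <= 12/5 * (4/9)^n * (1 - (4/9)^k).
Proof.
  induction k.
  - rewrite Nat.add_0_r, Rminus_eq_0, Rabs_R0. simpl. lra.
  - replace (n + S k)%nat with (S (n + k)) by lia.
    pose proof (rho_step (n + k) u). rewrite pow_add in H.
    replace (rho_n (S (n + k)) u - rho_n n u) with
      ((rho_n (S (n + k)) u - rho_n (n+k) u) + (rho_n (n+k) u - rho_n n u)) by ring.
    eapply Rle_trans. apply Rabs_triang. simpl pow. lra.
Qed.

Lemma pow49_pos n : 0 < (4/9)^n.
Proof. apply pow_lt. lra. Qed.

Lemma rho_tail' n k u : Rabs (rho_n (n + k) u - rho_n n u) <= 12/5 * (4/9)^n.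
Proof.
  pose proof (rho_tail n k u). pose proof (pow49_pos n). pose proof (pow49_pos k).
  assert (12/5 * (4/9)^n * (1 - (4/9)^k) <= 12/5 * (4/9)^n) by nra. lra.
Qed.

Lemma small_pow eps : 0 < eps -> exists N, (4/9)^N < eps.
Proof.
  intro He. destruct (pow_lt_1_zero (4/9) ltac:(rewrite Rabs_right; lra) eps He) as [N HN].
  exists N. specialize (HN N (le_n N)). rewrite Rabs_right in HN; auto.
  left; apply pow49_pos.
Qed.

Lemma rho_cauchy u : ex_lim_seq_cauchy (fun n => rho_n n u).
Proof.
  intros [eps He]. simpl.
  destruct (small_pow (eps / 5) ltac:(lra)) as [N HN]. exists N. intros n m Hn Hm.
  pose proof (rho_tail' N (n - N) u). pose proof (rho_tail' N (m - N) u).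
  replace (N + (n - N))%nat with n in H by lia. replace (N + (m - N))%nat with m in H0 by lia.
  replace (rho_n n u - rho_n m u) with ((rho_n n u - rho_n N u) - (rho_n m u - rho_n N u)) by ring.
  eapply Rle_lt_trans. apply Rabs_triang. rewrite Rabs_Ropp. lra.
Qed.

Definition rstar (u : R) : R := Lim_seq (fun n => rho_n n u).

Lemma rstar_lim u : is_lim_seq (fun n => rho_n n u) (rstar u).
Proof.
  unfold rstar. apply Lim_seq_correct'. apply ex_lim_seq_cauchy_corr. apply rho_cauchy.
Qed.

Lemma lim_le_const (v : nat -> R) (l c : R) : is_lim_seq v l -> (forall n, v n <= c) -> l <= c.
Proof.
  intros H Hc. pose proof (is_lim_seq_le v (fun _ => c) l c Hc H (is_lim_seq_const c)). simpl in H0. auto.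
Qed.
Lemma lim_ge_const (v : nat -> R) (l c : R) : is_lim_seq v l -> (forall n, c <= v n) -> c <= l.
Proof.
  intros H Hc. pose proof (is_lim_seq_le (fun _ => c) v c l Hc (is_lim_seq_const c) H). simpl in H0. auto.
Qed.

Lemma rstar_approx n u : Rabs (rstar u - rho_n n u) <= 12/5 * (4/9)^n.
Proof.
  pose proof (proj1 (is_lim_seq_incr_n _ n _) (rstar_lim u)) as H. simpl in H.
  apply Rabs_le_between.
  assert (rho_n n u - 12/5 * (4/9)^n <= rstar u).
  { apply (lim_ge_const _ _ _ H). intro k. pose proof (rho_tail' n k u).
    rewrite Nat.add_comm in H0. apply Rabs_le_between in H0. lra. }
  assert (rstar u <= rho_n n u + 12/5 * (4/9)^n).
  { apply (lim_le_const _ _ _ H). intro k. pose proof (rho_tail' n k u).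
    rewrite Nat.add_comm in H1. apply Rabs_le_between in H1. lra. }
  lra.
Qed.

Lemma rstar_good : Good rstar.
Proof.
  split.
  - intro u. apply cont_intro. intros eps He.
    destruct (small_pow (eps / 8) ltac:(lra)) as [N HN].
    destruct (cont_elim _ u (proj1 (rho_n_good N) u) (eps/3) ltac:(lra)) as [d [Hd Hd']].
    exists d. split; auto. intros y Hy. specialize (Hd' y Hy).
    pose proof (rstar_approx N y). pose proof (rstar_approx N u).
    replace (rstar y - rstar u) with ((rstar y - rho_n N y) + (rho_n N y - rho_n N u) - (rstar u - rho_n N u)) by ring.
    apply Rabs_le_between in H. apply Rabs_le_between in H0. apply Rabs_def2 in Hd'.
    apply Rabs_def1; lra.
  - intro u. pose proof (rstar_lim u). split.
    + apply (lim_ge_const _ _ _ H). intro n. apply (proj2 (rho_n_good n) u).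
    + apply (lim_le_const _ _ _ H). intro n. apply (proj2 (rho_n_good n) u).
Qed.

Lemma rstar_fix u : Top rstar u = rstar u.
Proof.
  assert (H : forall n, Rabs (Top rstar u - rstar u) <= 4 * (4/9)^n).
  { intro n.
    pose proof (Top_contr rstar (rho_n n) (12/5 * (4/9)^n) rstar_good (rho_n_good n)
       (fun v => rstar_approx n v) u).
    pose proof (rstar_approx (S n) u). rewrite rho_n_S in H0. simpl pow in H0.
    replace (Top rstar u - rstar u) with ((Top rstar u - Top (rho_n n) u) - (rstar u - Top (rho_n n) u)) by ring.
    eapply Rle_trans. apply Rabs_triang. rewrite Rabs_Ropp. pose proof (pow49_pos n). lra. }
  destruct (Req_dec (Top rstar u) (rstar u)) as [e|ne]; auto.
  assert (0 < Rabs (Top rstar u - rstar u)) by (apply Rabs_pos_lt; lra).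
  destruct (small_pow (Rabs (Top rstar u - rstar u) / 8) ltac:(lra)) as [N HN].
  specialize (H N). lra.
Qed.

Lemma locally_ball (x d : R) (P : R -> Prop) : 0 < d ->
  (forall y, Rabs (y - x) < d -> P y) -> locally x P.
Proof.
  intros Hd H. exists (mkposreal d Hd). intros y Hy. apply H. exact Hy.
Qed.

Lemma der_ext_loc (f g : R -> R) x l d : 0 < d ->
  (forall y, Rabs (y - x) < d -> f y = g y) -> is_derive f x l -> is_derive g x l.
Proof.
  intros Hd He H. apply (is_derive_ext_loc f g x l); auto. apply (locally_ball x d); auto.
Qed.

Definition gstar (w : R) : R := mm w / rstar w.
Definition q (u : R) : R := u * rstar u.

Lemma gstar_cont w : continuity_pt gstar w.
Proof. apply integrand_cont, rstar_good. Qed.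

Lemma rstar_cont w : continuity_pt rstar w.
Proof. apply (proj1 rstar_good). Qed.
Lemma rstar_bd w : 3 <= rstar w <= 13/3.
Proof. apply (proj2 rstar_good). Qed.

Lemma q_eq u : 0 < u -> q u = 3 * u + RInt gstar 0 u.
Proof.
  intro Hu. unfold q. rewrite <- (rstar_fix u) at 1. unfold Top.
  destruct (Rle_dec u 0); [lra|]. fold gstar. field. lra.
Qed.

Lemma q_bounds u : 0 < u -> 3 * u <= q u <= 13/3 * u.
Proof. intro Hu. unfold q. pose proof (rstar_bd u). nra. Qed.

Lemma q_cont u : continuity_pt q u.
Proof. unfold q. apply continuity_pt_mult. apply continuity_pt_id. apply rstar_cont. Qed.

Lemma q_deriv u : 0 < u -> is_derive q u (3 + rr u / q u).
Proof.
  intro Hu.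
  apply (der_ext_loc (fun v => 3 * v + RInt gstar 0 v) q u _ u Hu).
  - intros y Hy. apply Rabs_def2 in Hy. rewrite q_eq; auto. lra.
  - replace (3 + rr u / q u) with (3 * 1 + gstar u).
    + apply der_plus.
      * assert (H3 : is_derive (fun v : R => 3 * v) u (3 * 1)) by (auto_derive; auto; ring). exact H3.
      * apply RInt_deriv. apply gstar_cont.
    + unfold gstar, mm, q. destruct (Rle_dec u 0); [lra|]. pose proof (rstar_bd u). field. lra.
Qed.

Definition iq (w : R) : R := / q w.
Definition SS (u : R) : R := RInt iq 1 u.

Lemma iq_cont w : 0 < w -> continuity_pt iq w.
Proof.
  intro Hw. unfold iq. apply continuity_pt_inv. apply q_cont. pose proof (q_bounds w Hw). lra.
Qed.

Lemma iq_exRInt a b : 0 < a -> 0 < b -> ex_RInt iq a b.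
Proof.
  intros Ha Hb. apply (@ex_RInt_continuous R_CompleteNormedModule). intros z Hz.
  apply cont_to_continuous. apply iq_cont.
  assert (0 < Rmin a b) by (apply Rmin_pos; auto). lra.
Qed.

Lemma S_deriv u : 0 < u -> is_derive SS u (iq u).
Proof.
  intro Hu. apply (is_derive_RInt iq SS 1 u).
  - apply (locally_ball u (u/2)); [lra|]. intros y Hy. apply Rabs_def2 in Hy.
    unfold SS. apply (@RInt_correct R_CompleteNormedModule). apply iq_exRInt; lra.
  - apply cont_to_continuous, iq_cont; auto.
Qed.

Lemma iq_pos w : 0 < w -> 0 < iq w.
Proof. intro Hw. unfold iq. apply Rinv_0_lt_compat. pose proof (q_bounds w Hw). lra. Qed.

Lemma S_cont u : 0 < u -> continuity_pt SS u.
Proof. intro Hu. eapply cont_of_der. apply S_deriv; auto. Qed.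

Lemma S_lt u v : 0 < u -> u < v -> SS u < SS v.
Proof.
  intros Hu Huv. apply (mono_lt SS iq); auto.
  - intros x Hx. apply S_deriv. lra.
  - intros x Hx. apply iq_pos. lra.
Qed.

Lemma S_1 : SS 1 = 0.
Proof. unfold SS. exact (@RInt_point R_CompleteNormedModule 1 iq). Qed.

Lemma S_le_ln u : 0 < u <= 1 -> SS u <= 3/13 * ln u.
Proof.
  intro Hu.
  pose proof (mono_le (fun v => SS v - 3/13 * ln v) (fun v => iq v - 3/13 * / v) u 1 (proj2 Hu)) as H.
  simpl in H. rewrite S_1, ln_1 in H.
  enough (SS u - 3/13 * ln u <= 0 - 3/13 * 0) by lra. apply H.
  - intros x Hx. apply der_minus. apply S_deriv; lra.
    apply (der_ext (fun v => 3/13 * ln v) _ x (3/13 * / x)); auto. auto_derive; [lra| field; lra].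
  - intros x Hx. unfold iq. pose proof (q_bounds x ltac:(lra)).
    assert (/ q x >= / (13/3 * x)). { apply Rle_ge, Rinv_le_contravar; lra. }
    replace (/ (13/3 * x)) with (3/13 * / x) in H1 by (field; lra). lra.
Qed.

Lemma S_ge_ln u : 1 <= u -> 3/13 * ln u <= SS u.
Proof.
  intro Hu.
  pose proof (mono_le (fun v => SS v - 3/13 * ln v) (fun v => iq v - 3/13 * / v) 1 u Hu) as H.
  simpl in H. rewrite S_1, ln_1 in H.
  enough (0 - 3/13 * 0 <= SS u - 3/13 * ln u) by lra. apply H.
  - intros x Hx. apply der_minus. apply S_deriv; lra.
    apply (der_ext (fun v => 3/13 * ln v) _ x (3/13 * / x)); auto. auto_derive; [lra| field; lra].
  - intros x Hx. unfold iq. pose proof (q_bounds x ltac:(lra)).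
    assert (/ q x >= / (13/3 * x)). { apply Rle_ge, Rinv_le_contravar; lra. }
    replace (/ (13/3 * x)) with (3/13 * / x) in H1 by (field; lra). lra.
Qed.

Lemma Rmax_lip a b c : Rabs (Rmax a c - Rmax b c) <= Rabs (a - b).
Proof.
  unfold Rmax. destruct (Rle_dec a c), (Rle_dec b c); unfold Rabs;
  repeat match goal with |- context [Rcase_abs ?x] => destruct (Rcase_abs x) end; lra.
Qed.

Lemma S_surj s : exists u, 0 < u /\ SS u = s.
Proof.
  set (u1 := Rmin 1 (exp (13/3 * s))). set (u2 := Rmax 1 (exp (13/3 * s))).
  assert (Hu1 : 0 < u1) by (apply Rmin_pos; [lra| apply exp_pos]).
  assert (Hu12 : u1 <= u2) by (unfold u1, u2; eapply Rle_trans; [apply Rmin_l| apply Rmax_l]).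
  assert (HS1 : SS u1 <= s).
  { eapply Rle_trans. apply S_le_ln. split; auto. apply Rmin_l.
    assert (ln u1 <= 13/3 * s).
    { rewrite <- (ln_exp (13/3 * s)). unfold u1. destruct (Rle_dec 1 (exp (13/3*s))).
      - rewrite Rmin_left; auto. rewrite ln_1, ln_exp. rewrite <- ln_1, <- (ln_exp (13/3 * s)).
        apply ln_le; lra.
      - rewrite Rmin_right; [lra|]. lra. }
    lra. }
  assert (HS2 : s <= SS u2).
  { eapply Rle_trans; [|apply S_ge_ln; apply Rmax_l].
    assert (13/3 * s <= ln u2).
    { rewrite <- (ln_exp (13/3 * s)). apply ln_le. apply exp_pos. apply Rmax_r. }
    lra. }
  set (f := fun w => SS (Rmax w u1)).
  assert (Hf : continuity f).
  { intro w. unfold f. apply (continuity_pt_comp (fun w => Rmax w u1) SS).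
    - apply cont_intro. intros eps He. exists eps. split; auto. intros y Hy.
      eapply Rle_lt_trans. apply Rmax_lip. auto.
    - apply S_cont. eapply Rlt_le_trans; [exact Hu1| apply Rmax_r]. }
  assert (Hf1 : f u1 = SS u1) by (unfold f; rewrite Rmax_left; lra).
  assert (Hf2 : f u2 = SS u2) by (unfold f; rewrite Rmax_left; lra).
  assert (HS12 : SS u1 <= SS u2).
  { destruct (Req_dec u1 u2) as [e|ne]. rewrite e; lra. left; apply S_lt; lra. }
  destruct (IVT_gen f u1 u2 s Hf) as [x [Hx Hfx]].
  - rewrite Hf1, Hf2, Rmin_left, Rmax_right; lra.
  - rewrite Rmin_left, Rmax_right in Hx by lra. exists x. split. lra.
    unfold f in Hfx. rewrite Rmax_left in Hfx; lra.
Qed.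

Definition U (s : R) : R := epsilon (inhabits 1) (fun u => 0 < u /\ SS u = s).

Lemma U_spec s : 0 < U s /\ SS (U s) = s.
Proof. unfold U. apply epsilon_spec. apply S_surj. Qed.

Lemma S_inj u v : 0 < u -> 0 < v -> SS u = SS v -> u = v.
Proof.
  intros Hu Hv H. destruct (Rtotal_order u v) as [h|[h|h]]; auto.
  pose proof (S_lt u v Hu h); lra. pose proof (S_lt v u Hv h); lra.
Qed.

Lemma U_S u : 0 < u -> U (SS u) = u.
Proof. intro Hu. destruct (U_spec (SS u)) as [h1 h2]. apply S_inj; auto. Qed.

Lemma U_lt s t : s < t -> U s < U t.
Proof.
  intro H. destruct (U_spec s) as [a1 b1]. destruct (U_spec t) as [a2 b2].
  destruct (Rlt_or_le (U s) (U t)) as [h|h]; auto.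
  destruct (Req_dec (U s) (U t)) as [e|ne]. rewrite <- b1, <- b2, e in H; lra.
  pose proof (S_lt (U t) (U s) a2 ltac:(lra)). lra.
Qed.

Lemma U_below s u : 0 < u -> s < SS u -> U s < u.
Proof. intros Hu H. rewrite <- (U_S u Hu). apply U_lt; auto. Qed.
Lemma U_above s u : 0 < u -> SS u < s -> u < U s.
Proof. intros Hu H. rewrite <- (U_S u Hu). apply U_lt; auto. Qed.

Lemma U_cont s : continuity_pt U s.
Proof.
  apply cont_intro. intros eps He. destruct (U_spec s) as [h1 h2].
  set (u0 := U s) in *. set (eta := Rmin eps (u0/2)).
  assert (Heta : 0 < eta < u0) by (unfold eta; split; [apply Rmin_pos; lra| eapply Rle_lt_trans; [apply Rmin_r| lra]]).
  assert (Ha : SS (u0 - eta) < s) by (rewrite <- h2; apply S_lt; lra).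
  assert (Hb : s < SS (u0 + eta)) by (rewrite <- h2; apply S_lt; lra).
  exists (Rmin (s - SS (u0 - eta)) (SS (u0 + eta) - s)). split. apply Rmin_pos; lra.
  intros y Hy. apply Rabs_def2 in Hy. destruct Hy as [Hy1 Hy2].
  assert (y < SS (u0 + eta)) by (pose proof (Rmin_r (s - SS (u0 - eta)) (SS (u0 + eta) - s)); lra).
  assert (SS (u0 - eta) < y) by (pose proof (Rmin_l (s - SS (u0 - eta)) (SS (u0 + eta) - s)); lra).
  pose proof (U_below y (u0 + eta) ltac:(lra) H). pose proof (U_above y (u0 - eta) ltac:(lra) H0).
  assert (eta <= eps) by apply Rmin_l.
  apply Rabs_def1; lra.
Qed.

Lemma U_deriv s : is_derive U s (q (U s)).
Proof.
  apply is_derive_Reals.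
  assert (Hlb : forall a, U (s - 1) <= a <= U (s + 1) -> derivable_pt SS a).
  { intros a Ha. destruct (U_spec (s - 1)) as [h _].
    exists (iq a). apply is_derive_Reals. apply S_deriv. lra. }
  assert (Hincr : U (s - 1) <= U s <= U (s + 1)).
  { split; left; apply U_lt; lra. }
  pose proof (derivable_pt_lim_recip_interv SS U (s - 1) (s + 1) s Hlb (U_cont s)
     ltac:(lra) ltac:(lra) Hincr) as H.
  destruct (U_spec s) as [hs1 hs2].
  assert (Hd : derive_pt SS (U s) (Hlb (U s) Hincr) = iq (U s)).
  { apply derive_pt_eq_0. apply is_derive_Reals. apply S_deriv; auto. }
  rewrite Hd in H.
  replace (q (U s)) with (1 / iq (U s)).
  - apply H.
    + intros x Hx. unfold comp, id. apply (U_spec x).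
    + pose proof (iq_pos (U s) hs1). lra.
  - unfold iq. pose proof (q_bounds (U s) hs1). field. lra.
Qed.

Definition Vs (s : R) : R := -1 - U s.

Lemma Vs_d1 (s : R) : is_derive Vs s (- q (U s)).
Proof.
  unfold Vs. apply (der_ext (fun t => -1 - U t) _ s (0 - q (U s))).
  - intro; reflexivity.
  - lra.
  - apply der_minus. apply (is_derive_const (-1)). apply U_deriv.
Qed.

Lemma Derive_Vs (s : R) : Derive Vs s = - q (U s).
Proof. apply is_derive_unique. apply Vs_d1. Qed.

Lemma Vs_d2 (s : R) : is_derive (fun t => - q (U t)) s (- (3 * q (U s) + rr (U s))).
Proof.
  destruct (U_spec s) as [h1 _].
  apply (der_ext (fun t => - q (U t)) _ s (- (q (U s) * (3 + rr (U s) / q (U s))))).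
  - intro; reflexivity.
  - pose proof (q_bounds (U s) h1). change (- (q (U s) * (3 + rr (U s) / q (U s))) = - (3 * q (U s) + rr (U s)) :> R). field. lra.
  - apply (is_derive_opp (fun t => q (U t))).
    apply (der_comp q U s). apply q_deriv; auto. apply U_deriv.
Qed.

Lemma Vs_solution : is_bvp_solution Vs.
Proof.
  split; [|split].
  - intro s. split; [|split].
    + exists (- q (U s)). apply Vs_d1.
    + apply (ex_derive_ext (fun t => - q (U t))). intro t. symmetry; apply Derive_Vs.
      exists (- (3 * q (U s) + rr (U s))). apply Vs_d2.
    + simpl.
      assert (E1 : Derive (fun x : R => Derive (fun x0 : R => Vs x0) x) s = - (3 * q (U s) + rr (U s))).
      { rewrite (Derive_ext (fun x : R => Derive (fun x0 : R => Vs x0) x) (fun t => - q (U t))).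
        apply is_derive_unique. apply Vs_d2. intro t. apply Derive_Vs. }
      rewrite E1, Derive_Vs.
      unfold Vs. destruct (U_spec s) as [h1 _]. rewrite Rfun_neg; auto. ring.
  - apply is_lim_spec. intros eps. simpl. exists (SS eps). intros x Hx.
    pose proof (U_below x eps (cond_pos eps) Hx). destruct (U_spec x) as [h1 _].
    unfold Vs. rewrite Rabs_left1; lra.
  - apply is_lim_spec. intros M. simpl. exists (SS (Rmax 1 (-M))). intros x Hx.
    assert (0 < Rmax 1 (-M)) by (eapply Rlt_le_trans; [|apply Rmax_l]; lra).
    pose proof (U_above x _ H Hx). pose proof (Rmax_r 1 (-M)). unfold Vs. lra.
Qed.

Lemma sol_d1 V (HV : is_bvp_solution V) (t : R) : is_derive V t (Derive V t).
Proof. destruct HV as [H _]. apply Derive_correct. apply (H t). Qed.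

Lemma sol_d2 V (HV : is_bvp_solution V) (t : R) :
  is_derive (Derive V) t (3 * Derive V t + Rfun (V t)).
Proof.
  destruct HV as [H _]. destruct (H t) as [_ [h2 h3]].
  replace (3 * Derive V t + Rfun (V t)) with (Derive (Derive V) t).
  apply Derive_correct; auto. change (Derive (Derive V) t - 3 * Derive V t = Rfun (V t)) in h3. lra.
Qed.

Lemma sol_cont V (HV : is_bvp_solution V) t : continuity_pt V t.
Proof. eapply cont_of_der. apply (sol_d1 V HV). Qed.

Lemma sol_lim_m V (HV : is_bvp_solution V) eps : 0 < eps ->
  exists M, forall t, t < M -> Rabs (V t + 1) < eps.
Proof.
  intro He. destruct HV as [_ [H _]]. apply is_lim_spec in H.
  destruct (H (mkposreal eps He)) as [M HM]. exists M. intros t Ht.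
  specialize (HM t Ht). simpl in HM. replace (V t + 1) with (V t - -1) by ring. auto.
Qed.

Lemma sol_lim_p V (HV : is_bvp_solution V) A : exists M, forall t, M < t -> V t < A.
Proof.
  destruct HV as [_ [_ H]]. apply is_lim_spec in H. apply (H A).
Qed.

Definition phi (V : R -> R) (t : R) : R := Derive V t * exp (- (3 * t)).

Lemma phi_d V (HV : is_bvp_solution V) (t : R) : is_derive (phi V) t (Rfun (V t) * exp (- (3 * t))).
Proof.
  unfold phi.
  apply (der_ext (fun t => Derive V t * exp (- (3 * t))) _ t
      ((3 * Derive V t + Rfun (V t)) * exp (- (3 * t)) + Derive V t * (- 3 * exp (- (3 * t))))).
  - intro; reflexivity.
  - change (((3 * Derive V t + Rfun (V t)) * exp (- (3 * t)) + Derive V t * (- 3 * exp (- (3 * t)))) =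
      Rfun (V t) * exp (- (3 * t)) :> R). ring.
  - apply (der_mult (Derive V) (fun t => exp (- (3 * t)))). apply sol_d2; auto. auto_derive; auto. ring.
Qed.

Lemma D1_phi V (t : R) : Derive V t = phi V t * exp (3 * t).
Proof.
  unfold phi. rewrite Rmult_assoc, <- exp_plus. replace (- (3 * t) + 3 * t) with 0 by ring.
  rewrite exp_0. ring.
Qed.

Lemma Rfun_pos v : -1 <= v -> Rfun v = 4 * (v + 1).
Proof. intro h. unfold Rfun. destruct (Rlt_dec v (-1)); [lra| auto]. Qed.

Lemma Rfun_le v : v <= -1 -> 0 <= - Rfun v <= 4 * (-1 - v).
Proof.
  intro h. destruct (Req_dec v (-1)) as [e|ne].
  - subst. rewrite Rfun_pos; lra.
  - replace v with (-1 - (-1 - v)) by ring. rewrite Rfun_neg by lra.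
    pose proof (rr_pos (-1 - v) ltac:(lra)). pose proof (rr_le (-1 - v) ltac:(lra)). lra.
Qed.

Lemma der_max V (HV : is_bvp_solution V) c : (forall t, V t <= V c) -> Derive V c = 0.
Proof.
  intro H.
  assert (pr : derivable_pt V c).
  { exists (Derive V c). apply is_derive_Reals. apply sol_d1; auto. }
  rewrite <- (deriv_maximum V (c - 1) (c + 1) c pr ltac:(lra) ltac:(lra)).
  - symmetry. apply derive_pt_eq_0. apply is_derive_Reals. apply sol_d1; auto.
  - intros; apply H.
Qed.

Lemma V_incr V (HV : is_bvp_solution V) a b : a <= b ->
  (forall t, a <= t <= b -> 0 <= phi V t) -> V a <= V b.
Proof.
  intros Hab Hp. apply (mono_le V (Derive V) a b Hab).
  - intros; apply sol_d1; auto.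
  - intros t Ht. rewrite D1_phi. specialize (Hp t Ht). pose proof (exp_pos (3 * t)). nra.
Qed.

Lemma V_le_m1 V (HV : is_bvp_solution V) t : V t <= -1.
Proof.
  destruct (Rle_or_lt (V t) (-1)) as [h|h]; auto. exfalso.
  destruct (sol_lim_m V HV (V t + 1) ltac:(lra)) as [a Ha].
  destruct (sol_lim_p V HV (V t)) as [b Hb].
  set (a0 := Rmin a t - 1). set (b0 := Rmax b t + 1).
  assert (Ha0 : a0 < t) by (unfold a0; pose proof (Rmin_r a t); lra).
  assert (Hb0 : t < b0) by (unfold b0; pose proof (Rmax_r b t); lra).
  assert (Hout : forall x, (x <= a0 \/ b0 <= x) -> V x < V t).
  { intros x [hx|hx].
    - assert (x < a) by (unfold a0 in hx; pose proof (Rmin_l a t); lra).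
      specialize (Ha x H). apply Rabs_def2 in Ha. lra.
    - apply Hb. unfold b0 in hx; pose proof (Rmax_l b t); lra. }
  destruct (continuity_ab_maj V a0 b0 ltac:(lra) (fun c _ => sol_cont V HV c)) as [Mx [HM1 HM2]].
  assert (HVM : V t <= V Mx) by (apply HM1; lra).
  assert (Hglob : forall x, V x <= V Mx).
  { intro x. destruct (Rle_or_lt x a0). pose proof (Hout x (or_introl H)); lra.
    destruct (Rle_or_lt b0 x). pose proof (Hout x (or_intror H0)); lra. apply HM1; lra. }
  assert (Hd0 : Derive V Mx = 0) by (apply der_max; auto).
  destruct (cont_elim V Mx (sol_cont V HV Mx) (V Mx + 1) ltac:(lra)) as [d [Hd Hd']].
  assert (Hpos : forall x, Mx <= x <= Mx + d/2 -> -1 < V x).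
  { intros x Hx. assert (Rabs (x - Mx) < d) by (apply Rabs_def1; lra).
    specialize (Hd' x H). apply Rabs_def2 in Hd'. lra. }
  assert (Hphi : forall x, Mx < x <= Mx + d/2 -> 0 < phi V x).
  { intros x Hx. assert (phi V Mx = 0) by (unfold phi; rewrite Hd0; ring).
    rewrite <- H. apply (mono_lt (phi V) (fun t => Rfun (V t) * exp (- (3 * t)))); try lra.
    - intros; apply phi_d; auto.
    - intros y Hy. rewrite Rfun_pos by (pose proof (Hpos y ltac:(lra)); lra).
      pose proof (Hpos y ltac:(lra)). pose proof (exp_pos (- (3 * y))). nra. }
  assert (H1 : V Mx <= V (Mx + d/4)).
  { apply V_incr; auto. lra. intros x Hx. destruct (Req_dec x Mx).
    subst. unfold phi. rewrite Hd0. lra. left; apply Hphi; lra. }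
  assert (H2 : V (Mx + d/4) < V (Mx + d/2)).
  { apply (mono_lt V (Derive V)); try lra.
    - intros; apply sol_d1; auto.
    - intros x Hx. rewrite D1_phi. pose proof (Hphi x ltac:(lra)). pose proof (exp_pos (3 * x)). nra. }
  pose proof (Hglob (Mx + d/2)). lra.
Qed.

Lemma phi_anti V (HV : is_bvp_solution V) a b : a <= b -> phi V b <= phi V a.
Proof.
  intro Hab.
  enough (- phi V a <= - phi V b) by lra.
  apply (mono_le (fun t => - phi V t) (fun t => - (Rfun (V t) * exp (- (3 * t)))) a b Hab).
  - intros x _. apply (is_derive_opp (phi V)). apply phi_d; auto.
  - intros x _. pose proof (Rfun_le (V x) (V_le_m1 V HV x)). pose proof (exp_pos (- (3 * x))). nra.
Qed.

Lemma zero_left V (HV : is_bvp_solution V) z : V z = -1 -> forall x, x <= z -> V x = -1.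
Proof.
  intros Hz x Hx.
  assert (Hd : Derive V z = 0).
  { apply der_max; auto. intro t. rewrite Hz. apply V_le_m1; auto. }
  assert (Hp : phi V z = 0) by (unfold phi; rewrite Hd; ring).
  pose proof (V_le_m1 V HV x).
  destruct (Req_dec (V x) (-1)) as [e|ne]; auto. exfalso.
  destruct (sol_lim_m V HV (-1 - V x) ltac:(lra)) as [M HM].
  set (x' := Rmin M x - 1).
  assert (Hx' : x' < M /\ x' < x) by (unfold x'; pose proof (Rmin_l M x); pose proof (Rmin_r M x); lra).
  specialize (HM x' (proj1 Hx')). apply Rabs_def2 in HM.
  assert (V x' <= V x).
  { apply V_incr; auto. lra. intros t Ht. rewrite <- Hp. apply phi_anti; auto. lra. }
  lra.
Qed.

Lemma exp_34_le_3 : exp (3/4) <= 3.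
Proof.
  eapply Rle_trans; [|apply exp_le_3]. left. apply exp_increasing. lra.
Qed.

Lemma V_lt_m1 V (HV : is_bvp_solution V) t : V t < -1.
Proof.
  destruct (Req_dec (V t) (-1)) as [e|ne]; [|pose proof (V_le_m1 V HV t); lra]. exfalso.
  set (Z := fun x => V x = -1).
  destruct (sol_lim_p V HV (-2)) as [b Hb].
  assert (Hbd : bound Z).
  { exists b. intros x Hx. destruct (Rle_or_lt x b); auto. specialize (Hb x H). unfold Z in Hx. lra. }
  destruct (completeness Z Hbd (ex_intro _ t e)) as [s2 [Hub Hlub]].
  assert (Hleft : forall x, x < s2 -> V x = -1).
  { intros x Hx. destruct (Classical_Prop.classic (exists z, Z z /\ x < z)) as [[z [Hz Hxz]]|hn].
    - apply (zero_left V HV z Hz). lra.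
    - assert (s2 <= x).
      { apply Hlub. intros y Hy. destruct (Rle_or_lt y x); auto. exfalso. apply hn. exists y; auto. }
      lra. }
  assert (Hs2 : V s2 = -1).
  { destruct (Req_dec (V s2) (-1)) as [e2|ne2]; auto. exfalso.
    assert (0 < Rabs (V s2 + 1)) by (apply Rabs_pos_lt; lra).
    destruct (cont_elim V s2 (sol_cont V HV s2) _ H) as [d [Hd Hd']].
    specialize (Hd' (s2 - d/2) ltac:(rewrite Rabs_left; lra)).
    rewrite (Hleft (s2 - d/2)) in Hd' by lra.
    replace (-1 - V s2) with (- (V s2 + 1)) in Hd' by ring. rewrite Rabs_Ropp in Hd'. lra. }
  assert (Hd0 : Derive V s2 = 0).
  { apply der_max; auto. intro x. rewrite Hs2. apply V_le_m1; auto. }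
  assert (Hp0 : phi V s2 = 0) by (unfold phi; rewrite Hd0; ring).
  set (W := fun x => -1 - V x).
  assert (HWc : forall c, continuity_pt W c).
  { intro c. unfold W. apply continuity_pt_minus. apply continuity_pt_const; intros a b'; reflexivity.
    apply sol_cont; auto. }
  destruct (continuity_ab_maj W s2 (s2 + 1/4) ltac:(lra) (fun c _ => HWc c)) as [tM [HM1 HM2]].
  set (M := W tM) in *.
  assert (HW0 : forall x, 0 <= W x) by (intro x; unfold W; pose proof (V_le_m1 V HV x); lra).
  assert (HM0 : 0 <= M) by apply HW0.
  set (K := 4 * M * exp (- (3 * s2))).
  assert (HK : 0 <= K) by (unfold K; pose proof (exp_pos (- (3 * s2))); nra).
  assert (Hphi : forall x, s2 <= x <= s2 + 1/4 -> - phi V x <= K * (x - s2)).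
  { intros x Hx.
    enough (K * s2 + phi V s2 <= K * x + phi V x) by lra.
    apply (mono_le (fun s => K * s + phi V s) (fun s => K * 1 + Rfun (V s) * exp (- (3 * s))) s2 x); try lra.
    - intros y _. apply (der_plus (fun s => K * s) (phi V)).
      assert (H3 : is_derive (fun v : R => K * v) y (K * 1)) by (auto_derive; auto; ring). exact H3.
      apply phi_d; auto.
    - intros y Hy. pose proof (Rfun_le (V y) (V_le_m1 V HV y)).
      assert (W y <= M) by (apply HM1; lra). unfold W in H0.
      assert (exp (- (3 * y)) <= exp (- (3 * s2))).
      { destruct (Req_dec y s2). subst; lra. left; apply exp_increasing; lra. }
      pose proof (exp_pos (- (3 * y))).
      assert (- Rfun (V y) * exp (- (3 * y)) <= 4 * M * exp (- (3 * s2))).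
      { apply Rle_trans with (4 * M * exp (- (3 * y))). apply Rmult_le_compat_r; lra.
        apply Rmult_le_compat_l; lra. }
      unfold K. lra. }
  assert (HdW : forall x, s2 <= x <= s2 + 1/4 -> - Derive V x <= 3 * M).
  { intros x Hx. rewrite D1_phi. specialize (Hphi x Hx).
    assert (E : K * (x - s2) * exp (3 * x) = 4 * M * (x - s2) * exp (3 * (x - s2))).
    { unfold K. replace (3 * (x - s2)) with (- (3 * s2) + 3 * x) by ring. rewrite exp_plus. ring. }
    assert (exp (3 * (x - s2)) <= 3).
    { eapply Rle_trans; [|apply exp_34_le_3]. destruct (Req_dec (3 * (x - s2)) (3/4)) as [h|h].
      rewrite h; lra. left; apply exp_increasing; lra. }
    pose proof (exp_pos (3 * x)). pose proof (exp_pos (3 * (x - s2))).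
    assert (- phi V x * exp (3 * x) <= K * (x - s2) * exp (3 * x)) by (apply Rmult_le_compat_r; lra).
    assert (4 * M * (x - s2) * exp (3 * (x - s2)) <= 4 * M * (1/4) * 3).
    { apply Rmult_le_compat; try nra. }
    lra. }
  assert (HWtM : M <= 3 * M * (tM - s2)).
  { assert (HWs2 : W s2 = 0) by (unfold W; rewrite Hs2; ring).
    enough (3 * M * s2 - W s2 <= 3 * M * tM - W tM) by (change (W tM) with M in H; replace (3 * M * (tM - s2)) with (3 * M * tM - 3 * M * s2) by ring; lra).
    apply (mono_le (fun s => 3 * M * s - W s) (fun s => 3 * M * 1 - (0 - Derive V s)) s2 tM); try lra.
    - intros y _. apply (der_minus (fun s => 3 * M * s) W).
      assert (H3 : is_derive (fun v : R => 3 * M * v) y (3 * M * 1)) by (auto_derive; auto; ring). exact H3.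
      unfold W. apply (der_minus (fun _ => -1) V). apply (is_derive_const (-1)). apply sol_d1; auto.
    - intros y Hy. pose proof (HdW y ltac:(lra)). lra. }
  assert (M <= 0) by nra.
  assert (W (s2 + 1/4) <= 0) by (pose proof (HM1 (s2 + 1/4) ltac:(lra)); lra).
  assert (Z (s2 + 1/4)) by (unfold Z; pose proof (HW0 (s2 + 1/4)); unfold W in *; lra).
  pose proof (Hub _ H1). lra.
Qed.

Lemma const_of_der0 (f : R -> R) : (forall x, is_derive f x 0) -> forall a b, f a = f b.
Proof.
  intros H a b.
  assert (forall a b, a <= b -> f a = f b).
  { intros a' b' Hab. apply Rle_antisym.
    - apply (mono_le f (fun _ => 0) a' b' Hab); auto; intros; lra.
    - enough (- f a' <= - f b') by lra.
      apply (mono_le (fun x => - f x) (fun _ => - 0) a' b' Hab).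
      + intros x _. apply (is_derive_opp f). auto.
      + intros; lra. }
  destruct (Rle_or_lt a b). auto. symmetry. apply H0. lra.
Qed.

Lemma D1_lim V (HV : is_bvp_solution V) eps : 0 < eps ->
  exists T, forall t, t < T -> Rabs (Derive V t) < eps.
Proof.
  intro He. destruct (sol_lim_m V HV (eps/8) ltac:(lra)) as [M HM].
  set (se := M - 1). set (c := Rabs (phi V se)).
  set (T := Rmin se (/3 * ln (eps / (2 * (c + 1))))).
  exists T. intros t Ht. unfold T in Ht.
  assert (Hts : t < se) by (pose proof (Rmin_l se (/3 * ln (eps / (2 * (c + 1))))); lra).
  assert (Hcmp : Rabs (phi V se - phi V t) <=
     (fun s => - (eps/6) * exp (- (3 * s))) se - (fun s => - (eps/6) * exp (- (3 * s))) t).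
  { apply (comp_bound (phi V) (fun s => Rfun (V s) * exp (- (3 * s)))
        (fun s => - (eps/6) * exp (- (3 * s))) (fun s => eps/2 * exp (- (3 * s))) t se); try lra.
    - intros; apply phi_d; auto.
    - intros x _. auto_derive; auto. field.
    - intros x Hx. rewrite Rabs_mult, (Rabs_right (exp _)) by (left; apply exp_pos).
      apply Rmult_le_compat_r. left; apply exp_pos.
      pose proof (Rfun_le (V x) (V_le_m1 V HV x)). specialize (HM x ltac:(unfold se in Hx; lra)).
      apply Rabs_def2 in HM. rewrite Rabs_left1; lra. }
  simpl in Hcmp.
  assert (Hpt : Rabs (phi V t) <= c + eps/6 * exp (- (3 * t))).
  { pose proof (exp_pos (- (3 * se))). 
    replace (phi V t) with (phi V se - (phi V se - phi V t)) by ring.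
    eapply Rle_trans. apply Rabs_triang. rewrite Rabs_Ropp. unfold c. assert (0 <= eps / 6 * exp (- (3 * se))) by (apply Rmult_le_pos; lra). nra. }
  rewrite D1_phi, Rabs_mult, (Rabs_right (exp _)) by (left; apply exp_pos).
  assert (E1 : exp (- (3 * t)) * exp (3 * t) = 1) by (rewrite <- exp_plus; replace (- (3 * t) + 3 * t) with 0 by ring; apply exp_0).
  assert (Hc : 0 <= c) by apply Rabs_pos.
  assert (He3 : exp (3 * t) < eps / (2 * (c + 1))).
  { assert (3 * t < ln (eps / (2 * (c + 1)))).
    { pose proof (Rmin_r se (/3 * ln (eps / (2 * (c + 1))))). lra. }
    rewrite <- (exp_ln (eps / (2 * (c + 1)))). apply exp_increasing; auto.
    apply Rdiv_lt_0_compat; lra. }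
  assert (c * exp (3 * t) <= eps / 2).
  { assert ((c + 1) * exp (3 * t) <= eps / 2).
    { apply Rle_trans with ((c + 1) * (eps / (2 * (c + 1)))). apply Rmult_le_compat_l; lra.
      right. field. lra. }
    pose proof (exp_pos (3 * t)). nra. }
  pose proof (exp_pos (3 * t)).
  apply Rle_lt_trans with ((c + eps/6 * exp (- (3 * t))) * exp (3 * t)).
  apply Rmult_le_compat_r; lra.
  replace ((c + eps / 6 * exp (- (3 * t))) * exp (3 * t)) with (c * exp (3 * t) + eps/6 * (exp (- (3 * t)) * exp (3 * t))) by ring.
  rewrite E1. lra.
Qed.

Definition uu (V : R -> R) (t : R) : R := -1 - V t.
Definition FF (V : R -> R) (t : R) : R := - Derive V t - q (uu V t).
Definition aa (V : R -> R) (t : R) : R := rr (uu V t) / q (uu V t).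

Lemma uu_pos V (HV : is_bvp_solution V) t : 0 < uu V t.
Proof. unfold uu. pose proof (V_lt_m1 V HV t). lra. Qed.

Lemma uu_d V (HV : is_bvp_solution V) (t : R) : is_derive (uu V) t (- Derive V t).
Proof.
  unfold uu. apply (der_ext (fun t => -1 - V t) _ t (0 - Derive V t)).
  - intro; reflexivity.
  - lra.
  - apply (der_minus (fun _ => -1) V). apply (is_derive_const (-1)). apply sol_d1; auto.
Qed.

Lemma Rfun_uu V (HV : is_bvp_solution V) t : Rfun (V t) = - rr (uu V t).
Proof.
  rewrite <- Rfun_neg by (apply uu_pos; auto). unfold uu. f_equal. ring.
Qed.

Lemma FF_d V (HV : is_bvp_solution V) (t : R) : is_derive (FF V) t (- aa V t * FF V t).
Proof.
  pose proof (uu_pos V HV t) as hu. pose proof (q_bounds _ hu) as hq.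
  unfold FF. apply (der_ext (fun t => - Derive V t - q (uu V t)) _ t
     (- (3 * Derive V t + Rfun (V t)) - (- Derive V t) * (3 + rr (uu V t) / q (uu V t)))).
  - intro; reflexivity.
  - rewrite Rfun_uu by auto. unfold aa.
    change (- (3 * Derive V t + - rr (uu V t)) - - Derive V t * (3 + rr (uu V t) / q (uu V t)) =
       - (rr (uu V t) / q (uu V t)) * (- Derive V t - q (uu V t)) :> R).
    field. lra.
  - apply (der_minus (fun t => - Derive V t) (fun t => q (uu V t))).
    + apply (is_derive_opp (Derive V)). apply sol_d2; auto.
    + apply (der_comp q (uu V)). apply q_deriv; auto. apply uu_d; auto.
Qed.

Lemma aa_cont V (HV : is_bvp_solution V) t : continuity_pt (aa V) t.
Proof.
  pose proof (uu_pos V HV t) as hu. pose proof (q_bounds _ hu) as hq.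
  unfold aa. apply continuity_pt_div.
  - apply (continuity_pt_comp (uu V) rr). eapply cont_of_der; apply uu_d; auto. apply rr_cont; auto.
  - apply (continuity_pt_comp (uu V) q). eapply cont_of_der; apply uu_d; auto. apply q_cont.
  - lra.
Qed.

Lemma aa_pos V (HV : is_bvp_solution V) t : 0 <= aa V t.
Proof.
  pose proof (uu_pos V HV t) as hu. pose proof (q_bounds _ hu) as hq. pose proof (rr_pos _ hu).
  unfold aa. left. apply Rdiv_lt_0_compat; lra.
Qed.

Lemma FF_zero V (HV : is_bvp_solution V) s0 : FF V s0 = 0.
Proof.
  set (A := fun t => RInt (aa V) s0 t).
  assert (HA : forall t, is_derive A t (aa V t)).
  { intro t. apply RInt_deriv. apply aa_cont; auto. }
  assert (HA0 : A s0 = 0) by (unfold A; exact (@RInt_point R_CompleteNormedModule s0 (aa V))).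
  set (P := fun t => FF V t * exp (A t)).
  assert (HP : forall t, P t = P s0).
  { intro t0. apply (const_of_der0 P). intro x. unfold P.
    apply (der_ext (fun t => FF V t * exp (A t)) _ x
       (- aa V x * FF V x * exp (A x) + FF V x * (aa V x * exp (A x)))).
    - intro; reflexivity.
    - change (- aa V x * FF V x * exp (A x) + FF V x * (aa V x * exp (A x)) = 0 :> R). ring.
    - apply (der_mult (FF V) (fun t => exp (A t))). apply FF_d; auto.
      apply (der_comp exp A). apply is_derive_exp. apply HA. }
  assert (HAneg : forall t, t <= s0 -> A t <= 0).
  { intros t Ht. rewrite <- HA0. apply (mono_le A (aa V) t s0 Ht); auto. intros; apply aa_pos; auto. }
  assert (Hge : forall t, t <= s0 -> Rabs (FF V s0) <= Rabs (FF V t)).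
  { intros t Ht. specialize (HP t). unfold P in HP. rewrite HA0, exp_0, Rmult_1_r in HP.
    rewrite <- HP. rewrite Rabs_mult, (Rabs_right (exp _)) by (left; apply exp_pos).
    assert (exp (A t) <= 1) by (rewrite <- exp_0; destruct (Req_dec (A t) 0) as [h|h];
       [rewrite h; lra| left; apply exp_increasing; pose proof (HAneg t Ht); lra]).
    pose proof (Rabs_pos (FF V t)). pose proof (exp_pos (A t)). nra. }
  destruct (Req_dec (FF V s0) 0) as [e|ne]; auto. exfalso.
  set (c := Rabs (FF V s0)).
  assert (Hc : 0 < c) by (apply Rabs_pos_lt; auto).
  destruct (D1_lim V HV (c/2) ltac:(lra)) as [Ta HTa].
  destruct (sol_lim_m V HV (c/10) ltac:(lra)) as [Tb HTb].
  set (t := Rmin s0 (Rmin Ta Tb) - 1).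
  assert (Ht1 : t <= s0 /\ t < Ta /\ t < Tb).
  { unfold t. pose proof (Rmin_l s0 (Rmin Ta Tb)). pose proof (Rmin_r s0 (Rmin Ta Tb)).
    pose proof (Rmin_l Ta Tb). pose proof (Rmin_r Ta Tb). lra. }
  specialize (Hge t (proj1 Ht1)). specialize (HTa t (proj1 (proj2 Ht1))).
  specialize (HTb t (proj2 (proj2 Ht1))).
  pose proof (uu_pos V HV t) as hu. pose proof (q_bounds _ hu) as hq.
  assert (uu V t < c/10) by (unfold uu; apply Rabs_def2 in HTb; lra).
  assert (Rabs (FF V t) < c).
  { unfold FF. eapply Rle_lt_trans. apply Rabs_triang. rewrite Rabs_Ropp, Rabs_Ropp.
    rewrite (Rabs_right (q _)) by lra. lra. }
  fold c in Hge. lra.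
Qed.

Theorem sol_repr V (HV : is_bvp_solution V) : exists c, forall t, V t = Vs (t + c).
Proof.
  set (Phi := fun t => SS (uu V t) - t).
  assert (HPhi : forall t, Phi t = Phi 0).
  { intro t0. apply (const_of_der0 Phi). intro x. unfold Phi.
    pose proof (uu_pos V HV x) as hu. pose proof (q_bounds _ hu) as hq.
    pose proof (FF_zero V HV x) as hF. unfold FF in hF.
    apply (der_ext (fun t => SS (uu V t) - t) _ x (- Derive V x * iq (uu V x) - 1)).
    - intro; reflexivity.
    - unfold iq. change (- Derive V x * / q (uu V x) - 1 = 0 :> R).
      replace (- Derive V x) with (q (uu V x)) by lra. field. lra.
    - apply (der_minus (fun t => SS (uu V t)) (fun t => t)).
      + apply (der_comp SS (uu V)). apply S_deriv; auto. apply uu_d; auto.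
      + assert (H3 : is_derive (fun t : R => t) x 1) by (auto_derive; auto). exact H3. }
  exists (Phi 0). intro t. specialize (HPhi t). unfold Phi in HPhi.
  unfold Vs, Phi. rewrite <- HPhi. replace (t + (SS (uu V t) - t)) with (SS (uu V t)) by ring.
  rewrite U_S by (apply uu_pos; auto). unfold uu. ring.
Qed.


Theorem lemma4p6 :
  (exists V : R -> R, is_bvp_solution V) /\
  (forall V1 V2 : R -> R, is_bvp_solution V1 -> is_bvp_solution V2 ->
     exists s0 : R, forall s : R, V1 s = V2 (s + s0)).
Proof.
  split.
  - exists Vs. apply Vs_solution.
  - intros V1 V2 H1 H2.
    destruct (sol_repr V1 H1) as [c1 E1]. destruct (sol_repr V2 H2) as [c2 E2].
    exists (c1 - c2). intro s. rewrite E1, E2. f_equal. ring.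
Qed.
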